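(* Let $M$ be a matroid, let $S,T$ be disjoint subsets of $E(M)$, let $k:=\kappa_M(S,T)$, and let $(A_1,\dots,A_t)$ be a sequence of sets with $A_1\subseteq A_2\subseteq\dots\subseteq A_t$, $S\subseteq A_i\subseteq E(M)-T$ and $\lambda_M(A_i)=k$ for all $i$; put $B_i:=E(M)-A_i$. Let $(C,D)$ be a partition of $E(M)-(S\cup T)$ such that $C$ is independent, $D$ is coindependent, and $\lambda_{M/C\setminus D}(S)=k$. Let $i,j\in\{1,\dots,t\}$ with $i<j$, let $C':=C\cap(A_j-A_i)$, $D':=D\cap(A_j-A_i)$, and $M':=M/C'\setminus D'$. Then $(A_i,B_j)$ is a partition of $E(M')$ with $S\subseteq A_i$, $T\subseteq B_j$ and $\lambda_{M'}(A_i)=k$. Moreover, $M'|A_i=M|A_i$ and $M'|B_j=M|B_j$.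
   Context: For a matroid $M$ with ground set $E$, $\lambda_M(X):=r_M(X)+r_M(E-X)-r(M)$, and for disjoint $S,T\subseteq E$, $\kappa_M(S,T):=\min\{\lambda_M(X):S\subseteq X\subseteq E-T\}$. $M|X$ denotes the restriction of $M$ to $X$. *)

(* Defs.v *)
From mathcomp Require Import all_boot.
Set Implicit Arguments. Unset Strict Implicit. Unset Printing Implicit Defensive.

Section Matroids.
Variable T : finType.

(* A (raw) matroid: a finite ground set E and a rank function.  Only the
   values of the rank on subsets of E are meaningful. *)
Record matroid := Matroid { ground : {set T}; rank : {set T} -> nat }.

Definition is_matroid (M : matroid) : Prop :=
  [/\ forall X : {set T}, X \subset ground M -> rank M X <= #|X|,
      forall X Y : {set T}, X \subset Y -> Y \subset ground M -> rank M X <= rank M Y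
    & forall X Y : {set T}, X \subset ground M -> Y \subset ground M ->
        rank M (X :|: Y) + rank M (X :&: Y) <= rank M X + rank M Y].

Definition lambda (M : matroid) (X : {set T}) : nat :=
  rank M X + rank M (ground M :\: X) - rank M (ground M).

Definition kappa (M : matroid) (S U : {set T}) : nat :=
  \big[minn/lambda M S]_(X : {set T} | (S \subset X) && (X \subset ground M :\: U))
     lambda M X.

Definition minor (M : matroid) (C D : {set T}) : matroid :=
  Matroid (ground M :\: (C :|: D)) (fun X => rank M (X :|: C) - rank M C).

Definition restrict (M : matroid) (X : {set T}) : matroid :=
  Matroid X (fun Y => rank M (Y :&: X)).

Definition independent (M : matroid) (C : {set T}) : Prop :=
  C \subset ground M /\ rank M C = #|C|.

Definition coindependent (M : matroid) (D : {set T}) : Prop :=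
  D \subset ground M /\ rank M (ground M :\: D) = rank M (ground M).

End Matroids.

(* Main.v *)
Require Import Defs.
From mathcomp Require Import all_boot.
From mathcomp Require Import zify.
From Stdlib Require Import FunctionalExtensionality.

Ltac elt F x :=
  move: (F x); case: (x \in _); case: (x \in _); case: (x \in _); case: (x \in _);
  case: (x \in _); case: (x \in _); case: (x \in _); by [].
Ltac elt8 F x :=
  move: (F x); case: (x \in _); case: (x \in _); case: (x \in _); case: (x \in _);
  case: (x \in _); case: (x \in _); case: (x \in _); case: (x \in _); by [].

Ltac unf := repeat match goal with
  | [H := ?b |- _] => match b with _ :&: _ => idtac | _ :\: _ => idtac end;
      match goal with |- context[H] => unfold H end end.
Ltac sub F := apply/subsetP; let x := fresh "x" in intros x; unf; rewrite ?inE; elt F x.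
Ltac seq F := apply/setP; let x := fresh "x" in intros x; unf; rewrite ?inE; elt F x.

Ltac sub8 F := apply/subsetP; let x := fresh "x" in intros x; unf; rewrite ?inE; elt8 F x.
Ltac seq8 F := apply/setP; let x := fresh "x" in intros x; unf; rewrite ?inE; elt8 F x.

Theorem lemma3p7 (T : finType) (M : matroid T) (S U : {set T})
  (t : nat) (A : 'I_t -> {set T}) (C D : {set T}) (i j : 'I_t) :
  is_matroid M ->
  S \subset ground M -> U \subset ground M -> [disjoint S & U] ->
  (forall a b : 'I_t, a <= b -> A a \subset A b) ->
  (forall a : 'I_t, S \subset A a /\ A a \subset ground M :\: U) ->
  (forall a : 'I_t, lambda M (A a) = kappa M S U) ->
  C :|: D = ground M :\: (S :|: U) -> [disjoint C & D] ->
  independent M C -> coindependent M D ->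
  lambda (minor M C D) S = kappa M S U ->
  i < j ->
  let B := fun a : 'I_t => ground M :\: A a in
  let M' := minor M (C :&: (A j :\: A i)) (D :&: (A j :\: A i)) in
  [/\ A i :|: B j = ground M' /\ [disjoint A i & B j],
      S \subset A i /\ U \subset B j,
      lambda M' (A i) = kappa M S U,
      restrict M' (A i) = restrict M (A i)
    & restrict M' (B j) = restrict M (B j)].
Proof.
move=> HM HSE HUE HSU Hmon HA Hlam HCD HdCD HCi HDc HN Hij B M'.
rewrite {}/B {}/M'.
have HAij : A i \subset A j := Hmon i j (ltnW Hij).
have [HSAi HAiE] := HA i. have [_ HAjE] := HA j.
have Hlami := Hlam i. have Hlamj := Hlam j.
case: HDc => _ HDc.
case: HM => _ Hmono Hsub.
set k := kappa M S U in Hlami Hlamj HN *.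
set E := ground M in HSE HUE HAiE HAjE HCD HDc Hlami Hlamj HN Hmono Hsub *.
set Ai := A i in HAij HSAi HAiE Hlami *.
set Aj := A j in HAij HAjE Hlamj *.
have F : forall x, [&& (x\in S)==>(x\in E), (x\in U)==>(x\in E), ~~((x\in S)&&(x\in U)),
   (x\in Ai)==>(x\in Aj), (x\in S)==>(x\in Ai), (x\in Aj)==>((x\in E)&& ~~(x\in U)),
   ((x\in C)||(x\in D)) == ((x\in E)&& ~~((x\in S)||(x\in U))) & ~~((x\in C)&&(x\in D))].
  move=> x.
  have h1 : (x\in S)==>(x\in E) by apply/implyP; exact: (subsetP HSE x).
  have h2 : (x\in U)==>(x\in E) by apply/implyP; exact: (subsetP HUE x).
  have h3 : ~~((x\in S)&&(x\in U)).
    move: HSU; rewrite -setI_eq0 => /eqP /setP /(_ x); rewrite !inE => ->; by [].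
  have h4 : (x\in Ai)==>(x\in Aj) by apply/implyP; exact: (subsetP HAij x).
  have h5 : (x\in S)==>(x\in Ai) by apply/implyP; exact: (subsetP HSAi x).
  have h6 : (x\in Aj)==>((x\in E)&& ~~(x\in U)).
    by apply/implyP => h; move: (subsetP HAjE x h); rewrite !inE andbC.
  have h7 : ((x\in C)||(x\in D)) == ((x\in E)&& ~~((x\in S)||(x\in U))).
    by move: HCD => /setP /(_ x); rewrite !inE => ->; rewrite andbC.
  have h8 : ~~((x\in C)&&(x\in D)).
    move: HdCD; rewrite -setI_eq0 => /eqP /setP /(_ x); rewrite !inE => ->; by [].
  by rewrite h1 h2 h3 h4 h5 h6 h7 h8.
set C' := C :&: (Aj :\: Ai).
set D' := D :&: (Aj :\: Ai).
set Bj := E :\: Aj.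
have sE : forall X : {set T}, X \subset E -> rank M X <= rank M E.
  by move=> X hX; apply: Hmono => //; apply: subxx.
have HED' : rank M (E :\: D') = rank M E.
  apply/eqP; rewrite eqn_leq; apply/andP; split.
    by apply: sE; rewrite /D'; sub F.
  by rewrite -HDc; apply: Hmono; rewrite /D'; [sub F | sub F].
have eg1 : (E :\: (C' :|: D')) :\: Ai = Bj by rewrite /C' /D' /Bj; seq F.
have eg2 : (E :\: (C' :|: D')) :|: C' = E :\: D' by rewrite /C' /D'; seq F.
have eN1 : (E :\: (C :|: D)) :\: S :|: C = U :|: C by seq F.
have eN2 : (E :\: (C :|: D)) :|: C = E :\: D by seq F.
move: HN; rewrite /lambda /= eN1 eN2 HDc => HN.
move: Hlami Hlamj; rewrite /lambda -/E => Hlami Hlamj.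
have subm : forall X Y V I : {set T}, X \subset E -> Y \subset E -> X :|: Y = V -> X :&: Y = I ->
   rank M V + rank M I <= rank M X + rank M Y.
  by move=> X Y V I hX hY <- <-; apply: Hsub.
have s4i := subm Ai (E :\: Ai) E (Ai :&: (E :\: Ai)) ltac:(sub F) ltac:(sub F) ltac:(seq F) erefl.
set C1 := C :&: Ai. set C2 := C :&: Bj.
have m0 : rank M C' <= rank M E by apply: sE; sub F.
have mA : rank M C' <= rank M (Ai :|: C') by apply: Hmono; sub F.
have mB : rank M C' <= rank M (Bj :|: C') by apply: Hmono; sub F.
have s1 := subm Ai C' (Ai:|:C') (Ai:&:C') ltac:(sub F) ltac:(sub F) erefl erefl.
have m2 : rank M (Bj :|: C') <= rank M (E :\: Ai) by apply: Hmono; sub F.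
have m3 : rank M (Ai :|: C') <= rank M Aj by apply: Hmono; sub F.
have s2 := subm Bj C' (Bj:|:C') (Bj:&:C') ltac:(sub F) ltac:(sub F) erefl erefl.
have s3 := subm (Ai:|:C') (Bj:|:C') (E:\:D') C' ltac:(sub F) ltac:(sub F) ltac:(seq F) ltac:(seq F).
have s4j := subm Aj Bj E (Aj:&:Bj) ltac:(sub F) ltac:(sub F) ltac:(seq F) erefl.
have l1 : rank M (S :|: C) <= rank M (Ai :|: C) by apply: Hmono; sub F.
have l2 : rank M (U :|: C) <= rank M (Bj :|: C) by apply: Hmono; sub F.
have l3 := subm (Ai:|:C') C (Ai:|:C) (C':|:C1) ltac:(sub F) ltac:(sub F) ltac:(seq F) ltac:(seq F).
have l4 := subm (Bj:|:C') C (Bj:|:C) (C':|:C2) ltac:(sub F) ltac:(sub F) ltac:(seq F) ltac:(seq F).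
have l5 := subm (C':|:C1) (C':|:C2) C C' ltac:(sub F) ltac:(sub F) ltac:(seq F) ltac:(seq F).
have t1 : rank M C <= rank M (S :|: C) by apply: Hmono; sub F.
have t2 : rank M C <= rank M (U :|: C) by apply: Hmono; sub F.
have t3 : rank M C <= rank M E by apply: sE; sub F.
have t4 := subm (S:|:C) (U:|:C) (E:\:D) C ltac:(sub F) ltac:(sub F) ltac:(seq F) ltac:(seq F).
rewrite HDc in t4.
rewrite HED' in s3. rewrite -/Bj in Hlamj.
have hl : rank M (Ai :|: C') + rank M (Bj :|: C') = k + rank M C' + rank M E by lia.
have ha : rank M (Ai :|: C') = rank M Ai + rank M C' by lia.
have hb : rank M (Bj :|: C') = rank M Bj + rank M C' by lia.
split.
- rewrite /=; split; first by seq F.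
  by rewrite -setI_eq0; apply/eqP; seq F.
- by split; sub F.
- rewrite /lambda /= eg1 eg2 HED'; lia.
- rewrite /restrict /=; congr Matroid; apply: functional_extensionality => Y.
  have u1 := subm (Y:&:Ai) C' (Y:&:Ai :|: C') ((Y:&:Ai):&:C') ltac:(sub8 F) ltac:(sub F) erefl erefl.
  have u2 := subm (Y:&:Ai:|:C') Ai (Ai:|:C') (Y:&:Ai) ltac:(sub8 F) ltac:(sub F) ltac:(seq8 F) ltac:(seq8 F).
  lia.
- rewrite /restrict /=; congr Matroid; apply: functional_extensionality => Y.
  have u1 := subm (Y:&:Bj) C' (Y:&:Bj :|: C') ((Y:&:Bj):&:C') ltac:(sub8 F) ltac:(sub F) erefl erefl.
  have u2 := subm (Y:&:Bj:|:C') Bj (Bj:|:C') (Y:&:Bj) ltac:(sub8 F) ltac:(sub F) ltac:(seq8 F) ltac:(seq8 F).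
  lia.
Qed.
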